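(* Let $K$ be a field, $A=K(x)[[y]]$ the algebra of formal power series in $y$ with coefficients in $K(x)$, and let $p,q$ be mutually prime positive integers. Suppose $P,Q\in A$ satisfy $P^p=Q^q$. For $n\geq0$ let $P_n,Q_n$ be the truncations of $P,Q$ to degree $n$ in $y$, and let $\omega=pQ_n\,dP_n-qP_n\,dQ_n$. Then $\omega$ is divisible by $y^n$, and the reduced rational differential one-form $\omega_{red}=\omega/y^n$ is of degree $n$ with respect to $y$ and vanishes along the line $\{y=0\}$.
   Context: For $P=\sum_{i\geq0}a_i(x)y^i\in A$, its truncation is $P_n=\sum_{i=0}^n a_i(x)y^i\in K(x)[y]$. For a rational one-form $\omega=\alpha\,dx+\beta\,dy$ with $\alpha,\beta\in K(x)[y]$, its degree with respect to $y$ is $\deg_y\omega=\max\{\deg_y\alpha,\deg_y\beta+1\}$. Divisibility by $y^n$ means both $\alpha$ and $\beta$ are divisible by $y^n$ in $K(x)[y]$; vanishing along $\{y=0\}$ means the pullback of the form to the line $y=0$ is zero. *)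

(* Defs.v *)
From HB Require Import structures.
From mathcomp Require Import all_boot all_order all_algebra.
From mathcomp Require Import fraction.
Set Implicit Arguments. Unset Strict Implicit. Unset Printing Implicit Defensive.
Import GRing.Theory.
Local Open Scope ring_scope.

Notation ratfun K := {fraction {poly K}}.

(* d/dx on K(x): computed on the canonical representative n/d of f,
   as (n' d - n d') / d^2 (independent of the representative). *)
Definition ddx (K : fieldType) (f : ratfun K) : ratfun K :=
  let r := repr f in
  @FracField.tofrac _ ((\n_r)^`() * \d_r - \n_r * (\d_r)^`())
  / @FracField.tofrac _ ((\d_r) ^+ 2).

(* Formal power series in y over a commutative ring R = K(x),
   represented by their coefficient sequence. *)
Definition pseries (R : Type) := nat -> R.

Definition psmul (R : comNzRingType) (f g : pseries R) : pseries R :=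
  fun n => \sum_(i < n.+1) f i * g (n - i)%N.
Definition psone (R : comNzRingType) : pseries R :=
  fun n => if n == 0%N then 1 else 0.
Definition psexp (R : comNzRingType) (f : pseries R) (k : nat) : pseries R :=
  iter k (psmul f) (@psone R).

Definition trunc (R : comNzRingType) (n : nat) (f : pseries R) : {poly R} :=
  \poly_(i < n.+1) f i.

(* A rational one-form alpha dx + beta dy, alpha, beta in K(x)[y]. *)
Record oneform (K : fieldType) := OneForm {
  fdx : {poly ratfun K};
  fdy : {poly ratfun K} }.

Definition dform (K : fieldType) (F : {poly ratfun K}) : oneform K :=
  OneForm (map_poly (@ddx K) F) (F^`()).

Definition omega_form (K : fieldType) (p q : nat) (Pn Qn : {poly ratfun K})
  : oneform K :=
  OneForm (p%:R * Qn * fdx (dform Pn) - q%:R * Pn * fdx (dform Qn))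
          (p%:R * Qn * fdy (dform Pn) - q%:R * Pn * fdy (dform Qn)).

Definition form_divisible_by_yn (K : fieldType) (n : nat) (w : oneform K) :=
  ('X^n %| fdx w) && ('X^n %| fdy w).

Definition form_div_yn (K : fieldType) (n : nat) (w : oneform K) : oneform K :=
  OneForm (fdx w %/ 'X^n) (fdy w %/ 'X^n).

(* deg_y (alpha dx + beta dy) = max (deg_y alpha, deg_y beta + 1),
   with deg_y beta + 1 = size beta for beta <> 0 and the zero polynomial
   contributing 0. *)
Definition form_degy (K : fieldType) (w : oneform K) : nat :=
  maxn (size (fdx w)).-1 (size (fdy w)).

(* vanishing along {y = 0}: the pullback to y = 0 is alpha(x,0) dx *)
Definition vanishes_on_y0 (K : fieldType) (w : oneform K) : Prop :=
  (fdx w).[0] = 0.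

(* Main.v *)
Require Import Defs.
From Stdlib Require Import Classical.
From HB Require Import structures.
From mathcomp Require Import all_boot all_order all_algebra.
From mathcomp Require Import fraction ring zify.
Import GRing.Theory.
Local Open Scope ring_scope.
Set Implicit Arguments. Unset Strict Implicit.

Section Frac.
Variable R : idomainType.
Local Notation tf := (@FracField.tofrac R).
Lemma frac_repr (f : {fraction R}) :
  f * tf (\d_(repr f)) = tf (\n_(repr f)).
Proof.
set r := repr f.
have fE : f = \pi_({fraction R})%qT r by rewrite /r reprK.
have -> : tf (\d_r) = \pi_({fraction R})%qT (Ratio (\d_r) 1).
  by unlock FracField.tofrac.
have -> : tf (\n_r) = \pi_({fraction R})%qT (Ratio (\n_r) 1).
  by unlock FracField.tofrac.
rewrite fE.
transitivity (\pi_({fraction R})%qT (FracField.mulf r (Ratio (\d_r) 1))).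
  by symmetry; apply: FracField.pi_mul.
apply/eqmodP => /=.
rewrite FracField.equivfE /FracField.mulf /=.
rewrite !numden_Ratio ?oner_neq0 ?mulf_neq0 ?denom_ratioP ?oner_neq0 //.
by rewrite !mulr1 mulrC.
Qed.

Lemma frac_reprE (f : {fraction R}) :
  f = tf (\n_(repr f)) / tf (\d_(repr f)).
Proof.
rewrite -frac_repr mulfK // tofrac_eq0; exact: denom_ratioP.
Qed.
End Frac.

Section Ddx.
Variable K : fieldType.
Local Notation tf := (@FracField.tofrac {poly K}).

Lemma ddxE (n d : {poly K}) : d != 0 ->
  ddx (tf n / tf d) = tf (n^`() * d - n * d^`()) / tf (d ^+ 2).
Proof.
move=> d0; rewrite /ddx.
set r := repr _.
have D0 : \d_r != 0 by exact: denom_ratioP.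
set N := \n_r; set D := \d_r.
have e : n * D = N * d.
  have := @frac_repr _ (tf n / tf d); rewrite -/r -/N -/D => h.
  apply/eqP; rewrite -tofrac_eq !tofracM -h.
  by rewrite mulrAC divfK ?tofrac_eq0.
have e' : n^`() * D + n * D^`() = N^`() * d + N * d^`().
  by rewrite -!derivM e.
apply/eqP; rewrite eqr_div ?tofrac_eq0 ?expf_neq0 //.
rewrite -!tofracM tofrac_eq; apply/eqP.
apply/eqP; rewrite -subr_eq0; apply/eqP.
transitivity ((D * d^`() + D^`() * d) * (n * D - N * d)
   - D * d * (n^`() * D + n * D^`() - (N^`() * d + N * d^`()))); first by ring.
by rewrite e e' !subrr mulr0 mulr0 subrr.
Qed.
Lemma ddxD (f g : {fraction {poly K}}) : ddx (f + g) = ddx f + ddx g.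
Proof.
rewrite (@frac_reprE _ f) (@frac_reprE _ g).
set a := \n_(repr f); set b := \d_(repr f).
set c := \n_(repr g); set e := \d_(repr g).
have b0 : b != 0 by exact: denom_ratioP.
have e0 : e != 0 by exact: denom_ratioP.
rewrite addf_div ?tofrac_eq0 // -!tofracM -tofracD.
rewrite !ddxE ?mulf_neq0 //.
rewrite addf_div ?tofrac_eq0 ?expf_neq0 // -!tofracM -tofracD.
apply/eqP; rewrite eqr_div ?tofrac_eq0 ?expf_neq0 ?mulf_neq0 ?expf_neq0 //.
rewrite -!tofracM tofrac_eq; apply/eqP.
rewrite !(derivD, derivM); ring.
Qed.

Lemma ddxM (f g : {fraction {poly K}}) : ddx (f * g) = ddx f * g + f * ddx g.
Proof.
rewrite (@frac_reprE _ f) (@frac_reprE _ g).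
set a := \n_(repr f); set b := \d_(repr f).
set c := \n_(repr g); set e := \d_(repr g).
have b0 : b != 0 by exact: denom_ratioP.
have e0 : e != 0 by exact: denom_ratioP.
rewrite mulf_div -!tofracM.
rewrite !ddxE ?mulf_neq0 //.
rewrite !mulf_div -!tofracM.
rewrite addf_div ?tofrac_eq0 ?expf_neq0 ?mulf_neq0 ?expf_neq0 // -!tofracM -tofracD.
apply/eqP; rewrite eqr_div ?tofrac_eq0 ?expf_neq0 ?mulf_neq0 ?expf_neq0 //.
rewrite -!tofracM tofrac_eq; apply/eqP.
rewrite !(derivD, derivM); ring.
Qed.

Lemma ddx0 : ddx (0 : {fraction {poly K}}) = 0.
Proof.
have := ddxD 0 0; rewrite addr0 => /eqP; rewrite -subr_eq0 opprD addrA subrr add0r oppr_eq0 => /eqP.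
by [].
Qed.

Lemma ddx_sum (I : Type) (r : seq I) (F : I -> {fraction {poly K}}) :
  ddx (\sum_(i <- r) F i) = \sum_(i <- r) ddx (F i).
Proof.
elim: r => [|x r IH]; first by rewrite !big_nil ddx0.
by rewrite !big_cons ddxD IH.
Qed.

Lemma Dx_mul (a b : {poly {fraction {poly K}}}) :
  map_poly (@ddx K) (a * b) =
  map_poly (@ddx K) a * b + a * map_poly (@ddx K) b.
Proof.
apply/polyP => i.
rewrite coef_map_id0 ?ddx0 // coefD !coefM ddx_sum -big_split.
apply: eq_bigr => j _; rewrite !coef_map_id0 ?ddx0 // ddxM.
by [].
Qed.
End Ddx.

Section Eqm.
Variable R : comNzRingType.
Definition eqm m (a b : {poly R}) := forall i, (i < m)%N -> a`_i = b`_i.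

Lemma eqm_refl m a : eqm m a a. Proof. by []. Qed.
Lemma eqm_sym m a b : eqm m a b -> eqm m b a.
Proof. by move=> h i hi; rewrite h. Qed.
Lemma eqm_trans m a b c : eqm m a b -> eqm m b c -> eqm m a c.
Proof. by move=> h1 h2 i hi; rewrite h1 ?h2. Qed.
Lemma eqm_le m m' a b : (m' <= m)%N -> eqm m a b -> eqm m' a b.
Proof. by move=> le h i hi; apply: h; apply: leq_trans hi le. Qed.
Lemma eqmD m a b c d : eqm m a b -> eqm m c d -> eqm m (a + c) (b + d).
Proof. by move=> h1 h2 i hi; rewrite !coefD h1 ?h2. Qed.
Lemma eqmB m a b c d : eqm m a b -> eqm m c d -> eqm m (a - c) (b - d).
Proof. by move=> h1 h2 i hi; rewrite !coefB h1 ?h2. Qed.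
Lemma eqmM m a b c d : eqm m a b -> eqm m c d -> eqm m (a * c) (b * d).
Proof.
move=> h1 h2 i hi; rewrite !coefM; apply: eq_bigr => j _.
have hj : (j < m)%N by apply: leq_ltn_trans _ hi; rewrite -ltnS; exact: ltn_ord.
have hij : (i - j < m)%N by apply: leq_ltn_trans (leq_subr _ _) hi.
by rewrite h1 // h2.
Qed.
Lemma eqm_deriv m a b : eqm m.+1 a b -> eqm m a^`() b^`().
Proof. by move=> h i hi; rewrite !coef_deriv h. Qed.
Lemma eqm_map m (f : R -> R) a b : f 0 = 0 -> eqm m a b ->
  eqm m (map_poly f a) (map_poly f b).
Proof. by move=> f0 h i hi; rewrite !coef_map_id0 // h. Qed.

Lemma derX (D : {poly R} -> {poly R})
  (hD : forall a b, D (a * b) = D a * b + a * D b) a k :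
  D (a ^+ k.+1) = a ^+ k * D a *+ k.+1.
Proof.
elim: k => [|k IH]; first by rewrite expr1 expr0 mul1r.
rewrite exprS hD IH mulrnAr mulrA -exprS.
by rewrite (mulrC (D a)) [RHS]mulrS.
Qed.

Lemma trunc_coef N (f : pseries R) i :
  (trunc N f)`_i = if (i < N.+1)%N then f i else 0.
Proof. by rewrite /trunc coef_poly. Qed.

Lemma eqm_trunc_mul N (f g : pseries R) :
  eqm N.+1 (trunc N (psmul f g)) (trunc N f * trunc N g).
Proof.
move=> i hi; rewrite coefM trunc_coef hi /psmul; apply: eq_bigr => j _.
have hj : (j < N.+1)%N by apply: leq_ltn_trans _ hi; rewrite -ltnS; exact: ltn_ord.
have hij : (i - j < N.+1)%N by apply: leq_ltn_trans (leq_subr _ _) hi.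
by rewrite !trunc_coef hj hij.
Qed.

Lemma eqm_trunc_exp N (f : pseries R) k :
  eqm N.+1 (trunc N (psexp f k)) (trunc N f ^+ k).
Proof.
elim: k => [|k IH].
  move=> i hi; rewrite trunc_coef hi expr0 coef1 /psexp /= /psone.
  by case: (i == 0%N).
rewrite exprS.
apply: eqm_trans; first exact: eqm_trunc_mul.
exact: eqmM.
Qed.

Lemma eqm_trunc_le n N (f : pseries R) : (n <= N)%N ->
  eqm n.+1 (trunc N f) (trunc n f).
Proof.
move=> le i hi; rewrite !trunc_coef hi.
have -> : (i < N.+1)%N by apply: leq_trans hi _.
by [].
Qed.

Lemma size_term k (a b : {poly R}) :
  (size (k%:R * a * b)%R <= (size a + size b).-1)%N.
Proof.
apply: leq_trans (size_polyMleq _ _) _.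
have h1 : (size (k%:R * a)%R <= size a)%N.
  apply: leq_trans (size_polyMleq _ _) _.
  have := size_polyC_leq1 (k%:R : R); rewrite polyC_natr.
  lia.
lia.
Qed.

Lemma size_sub (a b : {poly R}) :
  (size (a - b)%R <= maxn (size a) (size b))%N.
Proof. by apply: leq_trans (size_polyD _ _) _; rewrite size_polyN. Qed.
End Eqm.

Section Cancel.
Variable R : idomainType.
Lemma cancel1 (c W : {poly R}) v M :
  (forall i, (i < v)%N -> c`_i = 0) -> c`_v != 0 ->
  eqm M (c * W) 0 -> eqm (M - v) W 0.
Proof.
move=> hc cv h i; elim/ltn_ind: i => i IH hi.
have hiv : (i + v < M)%N by rewrite addnC -ltn_subRL.
have hv : (v < (i + v).+1)%N by rewrite ltnS leq_addl.
move: (h _ hiv); rewrite coef0 coefM (bigD1 (Ordinal hv)) //=.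
rewrite big1 ?addr0; last first.
  move=> j hj.
  have hjv : (nat_of_ord j != v).
    by apply: contra hj => /eqP e; apply/eqP/val_inj.
  case: (ltngtP j v) => [jv|vj|jv].
  - by rewrite hc ?mul0r.
  - have := ltn_ord j => jlt.
    rewrite IH ?coef0 ?mulr0 //; move: jlt hi vj; lia.
  - by rewrite jv eqxx in hjv.
rewrite addnK coef0 => /eqP; rewrite mulf_eq0 (negbTE cv) /= => /eqP.
by [].
Qed.

Lemma cancelX (A W : {poly R}) v :
  (forall i, (i < v)%N -> A`_i = 0) -> A`_v != 0 ->
  forall k M, eqm M (A ^+ k * W) 0 -> eqm (M - k * v) W 0.
Proof.
move=> hA hv; elim=> [|k IH] M h.
  by rewrite mul0n subn0; move: h; rewrite expr0 mul1r.
rewrite exprS -mulrA in h.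
have := cancel1 hA hv h; move/IH.
by rewrite -subnDA mulSn.
Qed.
End Cancel.

Lemma id1 (R : comNzRingType) (A B a b : R) (p q : nat) :
  A ^+ p.+1 * (p.+1%:R * B * a - q.+1%:R * A * b) =
  (A ^+ p * a *+ p.+1) * (A * B) - A ^+ p.+1 * (q.+1%:R * A * b).
Proof. rewrite -mulr_natr exprS; ring. Qed.
Lemma id2 (R : comNzRingType) (A B b : R) (q : nat) :
  (B ^+ q * b *+ q.+1) * (A * B) = B ^+ q.+1 * (q.+1%:R * A * b).
Proof. rewrite -mulr_natr exprS; ring. Qed.

Lemma predD_le x y a b : (x <= a)%N -> (y <= b)%N -> ((x + y).-1 <= (a + b).-1)%N.
Proof. lia. Qed.
Lemma pred_le x y : (x <= y.+1)%N -> (x.-1 <= y)%N.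
Proof. lia. Qed.

Lemma finish (K : fieldType) n (ax ay : {poly ratfun K}) :
  eqm n.+1 ax 0 -> eqm n ay 0 ->
  (size ax <= (n + n).+1)%N -> (size ay <= n + n)%N ->
  let w := OneForm ax ay in
  [/\ form_divisible_by_yn n w,
      (form_degy (form_div_yn n w) <= n)%N
    & vanishes_on_y0 (form_div_yn n w)].
Proof.
move=> hx hy sx sy w.
have dv : forall (a : {poly ratfun K}) m, eqm m a 0 -> 'X^m %| a.
  move=> a m h; rewrite -[a](poly_take_drop m).
  have -> : take_poly m a = 0.
    apply/polyP => i; rewrite coef_take_poly coef0.
    by case: ifP => // hi; rewrite h // coef0.
  by rewrite add0r; apply: dvdp_mull; apply: dvdpp.
split.
- apply/andP; split; apply: dv => //.
  by apply: eqm_le hx.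
- rewrite /form_degy /form_div_yn /= -!Pdiv.IdomainMonic.drop_poly_divp !size_drop_poly geq_max.
  apply/andP; split; [move: sx; set s := size ax => sx | move: sy; set s := size ay => sy]; lia.
- rewrite /vanishes_on_y0 /= -Pdiv.IdomainMonic.drop_poly_divp horner_coef0 coef_drop_poly add0n.
  by rewrite hx // coef0.
Qed.

Unset Implicit Arguments.
Set Strict Implicit.

Theorem mainTheorem9 (K : fieldType) (p q : nat) (P Q : pseries (ratfun K)) :
  (0 < p)%N -> (0 < q)%N -> coprime p q ->
  psexp P p = psexp Q q ->
  forall n : nat,
    let w := omega_form p q (trunc n P) (trunc n Q) in
    [/\ form_divisible_by_yn n w,
        (form_degy (form_div_yn n w) <= n)%N
      & vanishes_on_y0 (form_div_yn n w)].
Proof.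
move=> p0 q0 _; case: p p0 => [//|p'] _; case: q q0 => [//|q'] _ e n w; rewrite /w /omega_form /dform /=; clear w.
have sP : (size (trunc n P) <= n.+1)%N by apply: size_poly.
have sQ : (size (trunc n Q) <= n.+1)%N by apply: size_poly.
have sDx : forall a : {poly ratfun K}, (size (map_poly (@ddx K) a) <= size a)%N.
  move=> a; apply/leq_sizeP => j hj; rewrite coef_map_id0 ?ddx0 //.
  by move/leq_sizeP: (leqnn (size a)) => ->; rewrite ?ddx0.
have sDy : forall a : {poly ratfun K}, (size a^`() <= (size a).-1)%N.
  move=> a; apply/leq_sizeP => j hj; rewrite coef_deriv.
  by move/leq_sizeP: (leqnn (size a)) => -> //; [rewrite mul0rn | move: hj; lia].
have sx : forall (a b : {poly ratfun K}), (size a <= n.+1)%N -> (size b <= n.+1)%N ->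
   (size (p'.+1%:R * b * map_poly (@ddx K) a - q'.+1%:R * a * map_poly (@ddx K) b)%R <= (n + n).+1)%N.
  move=> a b ha hb; apply: leq_trans (size_sub _ _) _; rewrite geq_max.
  have h1 := size_term p'.+1 b (map_poly (@ddx K) a).
  have h2 := size_term q'.+1 a (map_poly (@ddx K) b).
  have h3 := sDx a; have h4 := sDx b.
  apply/andP; split.
  - apply: leq_trans h1 _; apply: leq_trans (predD_le hb (leq_trans h3 ha)) _; lia.
  - apply: leq_trans h2 _; apply: leq_trans (predD_le ha (leq_trans h4 hb)) _; lia.
have sy : forall (a b : {poly ratfun K}), (size a <= n.+1)%N -> (size b <= n.+1)%N ->
   (size (p'.+1%:R * b * a^`() - q'.+1%:R * a * b^`())%R <= n + n)%N.
  move=> a b ha hb; apply: leq_trans (size_sub _ _) _; rewrite geq_max.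
  have h1 := size_term p'.+1 b a^`().
  have h2 := size_term q'.+1 a b^`().
  have h3 := sDy a; have h4 := sDy b.
  apply/andP; split.
  - apply: leq_trans h1 _; apply: leq_trans (predD_le hb (leq_trans h3 (pred_le ha))) _; lia.
  - apply: leq_trans h2 _; apply: leq_trans (predD_le ha (leq_trans h4 (pred_le hb))) _; lia.
case: (classic (exists i, P i != 0)) => [ex|nex]; last first.
  have P0 : trunc n P = 0.
    apply/polyP => i; rewrite trunc_coef coef0.
    case: (eqVneq (P i) 0) => [->|h]; first by case: ifP.
    by exfalso; apply: nex; exists i.
  apply: finish; rewrite ?P0 ?map_poly0 ?deriv0 ?mulr0 ?mul0r ?subrr ?size_poly0 //;
    by move=> i _; rewrite coef0.
case: (ex_minnP ex) => v Pv vmin.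
have Pz : forall i, (i < v)%N -> P i = 0.
  move=> i hi; case: (eqVneq (P i) 0) => // h.
  by have := vmin _ h; rewrite leqNgt hi.
have vpv : (v <= p'.+1 * v)%N by rewrite leq_pmull.
set N := (n + p'.+1 * v)%N.
set A := trunc N P; set B := trunc N Q.
have hAB : eqm N.+1 (A ^+ p'.+1) (B ^+ q'.+1).
  apply: eqm_trans; first by apply: eqm_sym; apply: eqm_trunc_exp.
  by rewrite e; apply: eqm_trunc_exp.
have hA : forall i, (i < v)%N -> A`_i = 0.
  by move=> i hi; rewrite trunc_coef Pz //; case: ifP.
have hAv : A`_v != 0.
  rewrite trunc_coef.
  have -> : (v < N.+1)%N by rewrite ltnS /N; move: vpv; lia.
  exact: Pv.
have hP : eqm n.+1 (trunc n P) A by apply: eqm_sym; apply: eqm_trunc_le; rewrite /N leq_addr.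
have hQ : eqm n.+1 (trunc n Q) B by apply: eqm_sym; apply: eqm_trunc_le; rewrite /N leq_addr.
set Dx := map_poly (@ddx K).
have hDx : forall a b, Dx (a * b) = Dx a * b + a * Dx b by move=> a b; apply: Dx_mul.
have hx1 : eqm N.+1 (Dx (A ^+ p'.+1)) (Dx (B ^+ q'.+1)) by apply: eqm_map; [exact: ddx0|].
rewrite !(derX hDx) in hx1.
set Wx := p'.+1%:R * B * Dx A - q'.+1%:R * A * Dx B.
have hx2 : eqm N.+1 (A ^+ p'.+1 * Wx) 0.
  have h1 : eqm N.+1 ((A ^+ p' * Dx A *+ p'.+1) * (A * B))
                     ((B ^+ q' * Dx B *+ q'.+1) * (A * B)) by apply: eqmM.
  have h2 : eqm N.+1 (B ^+ q'.+1 * (q'.+1%:R * A * Dx B))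
                     (A ^+ p'.+1 * (q'.+1%:R * A * Dx B)).
    by apply: eqmM => //; apply: eqm_sym.
  move=> i hi; rewrite coef0.
  have -> : A ^+ p'.+1 * Wx = (A ^+ p' * Dx A *+ p'.+1) * (A * B)
     - A ^+ p'.+1 * (q'.+1%:R * A * Dx B) by rewrite /Wx id1.
  rewrite coefB h1 //.
  have -> : (B ^+ q' * Dx B *+ q'.+1) * (A * B) =
     B ^+ q'.+1 * (q'.+1%:R * A * Dx B) by rewrite id2.
  by rewrite h2 // subrr.
have hx3 := cancelX hA hAv hx2.
have hx4 : eqm n.+1 Wx 0.
  by apply: eqm_le hx3; rewrite /N; lia.
have hy1 : eqm N (A ^+ p'.+1)^`() (B ^+ q'.+1)^`() by apply: eqm_deriv.
rewrite !(derX (@derivM _)) in hy1.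
set Wy := p'.+1%:R * B * A^`() - q'.+1%:R * A * B^`().
have hy2 : eqm N (A ^+ p'.+1 * Wy) 0.
  have h1 : eqm N ((A ^+ p' * A^`() *+ p'.+1) * (A * B))
                  ((B ^+ q' * B^`() *+ q'.+1) * (A * B)) by apply: eqmM.
  have h2 : eqm N (B ^+ q'.+1 * (q'.+1%:R * A * B^`()))
                  (A ^+ p'.+1 * (q'.+1%:R * A * B^`())).
    apply: eqmM => //; apply: eqm_sym; apply: eqm_le hAB; exact: leqnSn.
  move=> i hi; rewrite coef0.
  have -> : A ^+ p'.+1 * Wy = (A ^+ p' * A^`() *+ p'.+1) * (A * B)
     - A ^+ p'.+1 * (q'.+1%:R * A * B^`()) by rewrite /Wy id1.
  rewrite coefB h1 //.
  have -> : (B ^+ q' * B^`() *+ q'.+1) * (A * B) =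
     B ^+ q'.+1 * (q'.+1%:R * A * B^`()) by rewrite id2.
  by rewrite h2 // subrr.
have hy3 := cancelX hA hAv hy2.
have hy4 : eqm n Wy 0.
  by apply: eqm_le hy3; rewrite /N; lia.
apply: finish; last 2 first.
- exact: sx.
- exact: sy.
- apply: eqm_trans hx4.
  apply: eqmB; apply: eqmM; (try apply: eqmM) => //; apply: eqm_map => //; exact: ddx0.
- apply: eqm_trans hy4.
  apply: eqmB; apply: eqmM; (try apply: eqmM) => //;
    (try by apply: eqm_le (leqnSn n) _); by apply: eqm_deriv.
Qed.
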